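(* Let $n\geq 2$ and let $[n]=U\sqcup A$ be a partition with $U=\{i_1<i_2<\cdots<i_L\}$ nonempty. Let $\bar x_1,\dots,\bar x_n,\bar y_1,\dots,\bar y_n\in\mathbb{R}^3$ be given. Consider the problem \[ \min \sum_{i=1}^{n-1} \left(\|x_i - x_{i+1}\|^2 + \|y_i - y_{i+1}\|^2\right), \] where $(x_i,y_i)=(\bar x_i,\bar y_i)$ is fixed for $i\in U$, and for each $i\in A$ the variable $(x_i,y_i)$ ranges over $\{(\bar x_i,\bar y_i),(\bar y_i,\bar x_i)\}$. Encode a feasible point by signs $s_i\in\{1,-1\}$, where $s_i=1$ if $(x_i,y_i)=(\bar x_i,\bar y_i)$ and $s_i=-1$ if $(x_i,y_i)=(\bar y_i,\bar x_i)$ (so $s_i=1$ for $i\in U$), and set $w_{i,i+1}=(\bar x_i-\bar y_i)^T(\bar x_{i+1}-\bar y_{i+1})$ for $1\le i\le n-1$. Put $i_0:=1$ and $i_{L+1}:=n$. Then an optimal solution $s^*$ of this problem is obtained as follows, where $\operatorname{sgn}$ is the sign function and $\operatorname{sgn}(0)$ may be taken to be either $1$ or $-1$: (1) For the last chunk ($\ell=L$): $s^*_{i_\ell}=1$ and $s^*_{i+1}=\operatorname{sgn}(w_{i,i+1})s^*_i$ for $i=i_\ell,i_\ell+1,\dots,i_{\ell+1}-1$. (2) For the first chunk ($\ell=0$): $s^*_{i_{\ell+1}}=1$ and $s^*_i=\operatorname{sgn}(w_{i,i+1})s^*_{i+1}$ for $i=i_{\ell+1}-1,i_{\ell+1}-2,\dots,i_\ell$.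 (3) For any other chunk ($1\le \ell\le L-1$): let $k$ be an index with $i_\ell\le k\le i_{\ell+1}-1$ minimizing $|w_{k,k+1}|$. Then $s^*_{i_\ell}=1$ and $s^*_{i+1}=\operatorname{sgn}(w_{i,i+1})s^*_i$ for $i=i_\ell,i_\ell+1,\dots,k-1$; and $s^*_{i_{\ell+1}}=1$ and $s^*_i=\operatorname{sgn}(w_{i,i+1})s^*_{i+1}$ for $i=i_{\ell+1}-1,i_{\ell+1}-2,\dots,k+1$.
   Context: This is the symmetry-breaking (''clustering'') step for estimated pairs of homologous bead positions $(\bar x_i,\bar y_i)$, $i=1,\dots,n$: pairs indexed by $U$ are unambiguous (fixed order), pairs indexed by $A$ are ambiguous (may be swapped). The $\ell$-th chunk consists of the indices from $i_\ell$ to $i_{\ell+1}$, and the objective splits as a sum over chunks of $\sum_{i=i_\ell}^{i_{\ell+1}-1}\left(\|x_i - x_{i+1}\|^2 + \|y_i - y_{i+1}\|^2\right)$. *)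

(* Defs.v *)
(* Indices are 1-based naturals 1..n, as in the paper. *)
From HB Require Import structures.
From mathcomp Require Import all_boot all_order all_algebra.
From mathcomp Require Import reals.
Set Implicit Arguments. Unset Strict Implicit. Unset Printing Implicit Defensive.
Import Order.TTheory GRing.Theory Num.Theory.
Local Open Scope ring_scope.

Section Defs.
Variable R : realType.

Definition dot3 (a b : 'rV[R]_3) : R := \sum_(j < 3) a 0 j * b 0 j.
Definition sqnorm3 (a : 'rV[R]_3) : R := dot3 a a.

Definition xpt (xb yb : nat -> 'rV[R]_3) (s : nat -> R) (i : nat) :=
  if s i == 1 then xb i else yb i.
Definition ypt (xb yb : nat -> 'rV[R]_3) (s : nat -> R) (i : nat) :=
  if s i == 1 then yb i else xb i.

Definition objective (n : nat) (xb yb : nat -> 'rV[R]_3) (s : nat -> R) : R :=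
  \sum_(1 <= i < n)
     (sqnorm3 (xpt xb yb s i - xpt xb yb s i.+1)
      + sqnorm3 (ypt xb yb s i - ypt xb yb s i.+1)).

Definition feasible (n : nat) (u : seq nat) (s : nat -> R) : Prop :=
  (forall i, (1 <= i <= n)%N -> s i = 1 \/ s i = -1) /\
  (forall i, i \in u -> s i = 1).

Definition wgt (xb yb : nat -> 'rV[R]_3) (i : nat) : R :=
  dot3 (xb i - yb i) (xb i.+1 - yb i.+1).

(* Breakpoints: i_0 = 1, i_l = l-th element of U (l = 1..L), i_{L+1} = n,
   where u lists U in increasing order and L = size u. *)
Definition brk (n : nat) (u : seq nat) (l : nat) : nat :=
  if l == 0%N then 1%N
  else if (l <= size u)%N then nth 0%N u l.-1 else n.

Definition constructed (n : nat) (u : seq nat) (xb yb : nat -> 'rV[R]_3)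
    (sg : R -> R) (s : nat -> R) : Prop :=
  let L := size u in
  let ib := brk n u in
  let w := wgt xb yb in
  (s (ib L) = 1 /\
   forall i, (ib L <= i < ib L.+1)%N -> s i.+1 = sg (w i) * s i) /\
  (s (ib 1%N) = 1 /\
   forall i, (ib 0%N <= i < ib 1%N)%N -> s i = sg (w i) * s i.+1) /\
  (forall l, (1 <= l < L)%N ->
     exists k, (ib l <= k < ib l.+1)%N /\
       (forall j, (ib l <= j < ib l.+1)%N -> `|w k| <= `|w j|) /\
       s (ib l) = 1 /\
       (forall i, (ib l <= i < k)%N -> s i.+1 = sg (w i) * s i) /\
       s (ib l.+1) = 1 /\
       (forall i, (k.+1 <= i < ib l.+1)%N -> s i = sg (w i) * s i.+1)).

End Defs.

(* Main.v *)
Require Import Defs.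
From HB Require Import structures.
From mathcomp Require Import all_boot all_order all_algebra.
From mathcomp Require Import reals ring lra zify.
Import Order.TTheory GRing.Theory Num.Theory.
Local Open Scope ring_scope.

Definition pm {R : realType} (x : R) := x = 1 \/ x = -1.

Lemma key_id {R : realType} (a b c d : 'rV[R]_3) :
  sqnorm3 (a - c) + sqnorm3 (b - d) - (sqnorm3 (a - d) + sqnorm3 (b - c))
  = - 2 * dot3 (a - b) (c - d).
Proof.
rewrite /sqnorm3 /dot3 !big_ord_recr !big_ord0 /= !mxE.
ring.
Qed.

Lemma neg1_neq1 {R : realType} : ((-1 : R) == 1) = false.
Proof. apply/eqP => h. have : (2:R) = 0 by lra. lra. Qed.

Lemma sgpm {R : realType} {sg : R -> R} :
  (forall t : R, 0 < t -> sg t = 1) ->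
  (forall t : R, t < 0 -> sg t = -1) ->
  (sg 0 = 1 \/ sg 0 = -1) -> forall t, pm (sg t).
Proof.
move=> hp hn h0 t; case: (ltrgtP t 0) => [h|h|->] //.
- by right; apply: hn.
- by left; apply: hp.
Qed.

Lemma sgabs {R : realType} {sg : R -> R} :
  (forall t : R, 0 < t -> sg t = 1) ->
  (forall t : R, t < 0 -> sg t = -1) -> forall t, sg t * t = `|t|.
Proof.
move=> hp hn t; case: (ltrgtP t 0) => [h|h|->].
- by rewrite hn // ltr0_norm // mulN1r.
- by rewrite hp // gtr0_norm // mul1r.
- by rewrite mulr0 normr0.
Qed.

Lemma pm_mul {R : realType} {x y : R} : pm x -> pm y -> pm (x * y).
Proof.
by case=> ->; case=> ->; rewrite /pm; [left|right|right|left]; ring.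
Qed.

Lemma pm_sq {R : realType} {x : R} : pm x -> x * x = 1.
Proof. by case=> ->; ring. Qed.

Definition E {R : realType} (w : nat -> R) (s : nat -> R) i := s i * s i.+1 * w i.

Lemma fwd_pm {R : realType} {sg : R -> R} {w s : nat -> R} {a b : nat} :
  (forall t, pm (sg t)) -> pm (s a) ->
  (forall i, (a <= i < b)%N -> s i.+1 = sg (w i) * s i) ->
  forall j, (a <= j <= b)%N -> pm (s j).
Proof.
move=> hsg ha hr; elim=> [|j IH] hj.
  have ha0 : a = 0%N by lia. by rewrite -ha0.
case: (eqVneq a j.+1) => [<- //|hne].
rewrite hr; last by lia.
apply: pm_mul => //; apply: IH; lia.
Qed.

Lemma bwd_pm {R : realType} {sg : R -> R} {w s : nat -> R} {a b : nat} :
  (forall t, pm (sg t)) -> pm (s b) ->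
  (forall i, (a <= i < b)%N -> s i = sg (w i) * s i.+1) ->
  forall j, (a <= j <= b)%N -> pm (s j).
Proof.
move=> hsg hb hr j hj; move Hd: (b - j)%N => d.
elim: d j hj Hd => [|d IH] j hj Hd.
  by have -> : j = b by lia.
rewrite hr; last by lia.
apply: pm_mul => //; apply: IH; lia.
Qed.

Lemma fwd_eq {R : realType} {g : nat -> R} {s t : nat -> R} {a b : nat} :
  (forall i, (a <= i < b)%N -> s i.+1 = g i * s i) ->
  (forall i, (a <= i < b)%N -> t i.+1 = g i * t i) ->
  s a = t a -> forall j, (a <= j <= b)%N -> s j = t j.
Proof.
move=> hs ht ha; elim=> [|j IH] hj.
  have ha0 : a = 0%N by lia. by rewrite -ha0.
case: (eqVneq a j.+1) => [<- //|hne].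
rewrite hs ?ht ?IH //; lia.
Qed.

Lemma bwd_eq {R : realType} {g : nat -> R} {s t : nat -> R} {a b : nat} :
  (forall i, (a <= i < b)%N -> s i = g i * s i.+1) ->
  (forall i, (a <= i < b)%N -> t i = g i * t i.+1) ->
  s b = t b -> forall j, (a <= j <= b)%N -> s j = t j.
Proof.
move=> hs ht hb j hj; move Hd: (b - j)%N => d.
elim: d j hj Hd => [|d IH] j hj Hd.
  by have -> : j = b by lia.
rewrite (hs j) ?(ht j) ?IH //; lia.
Qed.

Lemma E_le {R : realType} {w s : nat -> R} {i : nat} :
  pm (s i) -> pm (s i.+1) -> E w s i = `|w i| \/ E w s i = - `|w i|.
Proof.
rewrite /E => h1 h2; have := pm_mul h1 h2; case=> ->;
  case: (ler0P (w i)) => h; [right|left|left|right]; lra.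
Qed.

Lemma E_le' {R : realType} {w s : nat -> R} {i : nat} :
  pm (s i) -> pm (s i.+1) -> E w s i <= `|w i|.
Proof.
move=> h1 h2; have := normr_ge0 (w i).
case: (E_le (w := w) h1 h2) => ->; lra.
Qed.

Lemma E_fwd {R : realType} {sg : R -> R} {w s : nat -> R} {i : nat} :
  (forall t, sg t * t = `|t|) ->
  pm (s i) -> s i.+1 = sg (w i) * s i -> E w s i = `|w i|.
Proof.
move=> ha h1 h2; rewrite /E h2 -ha.
have := pm_sq h1; move=> hq.
transitivity ((s i * s i) * (sg (w i) * w i)); first ring.
by rewrite hq mul1r.
Qed.

Lemma E_bwd {R : realType} {sg : R -> R} {w s : nat -> R} {i : nat} :
  (forall t, sg t * t = `|t|) ->
  pm (s i.+1) -> s i = sg (w i) * s i.+1 -> E w s i = `|w i|.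
Proof.
move=> ha h1 h2; rewrite /E h2 -ha.
have := pm_sq h1; move=> hq.
transitivity ((s i.+1 * s i.+1) * (sg (w i) * w i)); first ring.
by rewrite hq mul1r.
Qed.

Lemma E_rev {R : realType} {sg : R -> R} {w s : nat -> R} {i : nat} :
  (forall t, sg t * t = `|t|) -> (forall t, pm (sg t)) ->
  w i != 0 -> pm (s i) -> pm (s i.+1) -> E w s i = `|w i| ->
  s i.+1 = sg (w i) * s i /\ s i = sg (w i) * s i.+1.
Proof.
rewrite /E => ha hsg hw h1 h2 he.
have hpos : 0 < `|w i| by rewrite normr_gt0.
move: he; have := ha (w i); have := hsg (w i).
case: h1 => ->; case: h2 => ->; case=> -> hh he;
  split; try ring; exfalso; lra.
Qed.

Lemma sum_split {R : realType} (F : nat -> R) a b k :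
  (a <= k < b)%N ->
  \sum_(a <= i < b) F i = \sum_(a <= i < k) F i + F k + \sum_(k.+1 <= i < b) F i.
Proof.
move=> hk.
have h1 : (a <= k)%N by lia.
have h2 : (k <= b)%N by lia.
rewrite (big_cat_nat h1 h2) /=.
rewrite (@big_ltn _ _ _ k b); [by rewrite addrA | lia].
Qed.

Lemma sum_def {R : realType} (F G : nat -> R) a b k c :
  (a <= k < b)%N ->
  (forall i, (a <= i < b)%N -> i != k -> F i <= G i) ->
  F k + c <= G k -> \sum_(a <= i < b) F i + c <= \sum_(a <= i < b) G i.
Proof.
move=> hk hle hkc; rewrite !(sum_split _ _ _ _ hk).
have h1 : \sum_(a <= i < k) F i <= \sum_(a <= i < k) G i.
  apply: ler_sum_nat => i hi; apply: hle; lia.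
have h2 : \sum_(k.+1 <= i < b) F i <= \sum_(k.+1 <= i < b) G i.
  apply: ler_sum_nat => i hi; apply: hle; lia.
lra.
Qed.

Lemma chunk_full {R : realType} (w s t : nat -> R) a b :
  (forall i, (a <= i < b)%N -> E w s i = `|w i|) ->
  (forall j, (a <= j <= b)%N -> pm (t j)) ->
  \sum_(a <= i < b) E w t i <= \sum_(a <= i < b) E w s i.
Proof.
move=> hs ht; apply: ler_sum_nat => i hi; rewrite hs //.
apply: E_le'; apply: ht; lia.
Qed.

Lemma chunk_mid {R : realType} {sg : R -> R} {w s t : nat -> R} {a b k : nat} :
  (forall t, sg t * t = `|t|) -> (forall t, pm (sg t)) ->
  (a <= k < b)%N ->
  (forall j, (a <= j < b)%N -> `|w k| <= `|w j|) ->
  s a = 1 -> s b = 1 ->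
  (forall i, (a <= i < k)%N -> s i.+1 = sg (w i) * s i) ->
  (forall i, (k.+1 <= i < b)%N -> s i = sg (w i) * s i.+1) ->
  (forall j, (a <= j <= b)%N -> pm (t j)) -> t a = 1 -> t b = 1 ->
  \sum_(a <= i < b) E w t i <= \sum_(a <= i < b) E w s i.
Proof.
move=> habs hsg hk hmin hsa hsb hf hb ht hta htb.
have pm1 : pm (1 : R) by left.
have hsa' : pm (s a) by rewrite hsa.
have hsb' : pm (s b) by rewrite hsb.
have hs1 := fwd_pm hsg hsa' hf.
have hs2 := bwd_pm hsg hsb' hb.
have hps : forall j, (a <= j <= b)%N -> pm (s j).
  move=> j hj; case: (leqP j k) => hjk; [apply: hs1|apply: hs2]; lia.
have Es : forall i, (a <= i < b)%N -> i != k -> E w s i = `|w i|.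
  move=> i hi hik; case: (ltnP i k) => hik'.
    apply: (E_fwd habs); [apply: hps; lia| apply: hf; lia].
  apply: (E_bwd habs); [apply: hps; lia| apply: hb; lia].
have Esk : - `|w k| <= E w s k.
  have := normr_ge0 (w k).
  by case: (E_le (w := w) (hps k ltac:(lia)) (hps k.+1 ltac:(lia))) => ->; lra.
have hS : \sum_(a <= i < b) `|w i| + (- 2 * `|w k|) <= \sum_(a <= i < b) E w s i.
  apply: (@sum_def _ _ _ _ _ k) => //.
    by move=> i hi hik; rewrite Es.
  lra.
have hT : \sum_(a <= i < b) E w t i <= \sum_(a <= i < b) `|w i|.
  apply: ler_sum_nat => i hi; apply: E_le'; apply: ht; lia.
case: (boolP (has (fun i => E w t i != `|w i|) (index_iota a b))).
  move=> /hasP [i0]; rewrite mem_index_iota => hi0 hne.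
  have he0 : E w t i0 = - `|w i0|.
    case: (E_le (w := w) (ht i0 ltac:(lia)) (ht i0.+1 ltac:(lia))) => // h.
    by rewrite h eqxx in hne.
  have hT2 : \sum_(a <= i < b) E w t i + 2 * `|w i0| <= \sum_(a <= i < b) `|w i|.
    apply: (@sum_def _ _ _ _ _ i0) => //.
      move=> i hi _; apply: E_le'; apply: ht; lia.
    rewrite he0; lra.
  have := hmin i0 hi0; lra.
rewrite -all_predC => /allP hall.
have Et : forall i, (a <= i < b)%N -> E w t i = `|w i|.
  move=> i hi; have := hall i; rewrite mem_index_iota hi /= => /(_ isT).
  by move/negPn/eqP.
case: (eqVneq (w k) 0) => hwk.
  have : `|w k| = 0 by rewrite hwk normr0.
  lra.
have hwj : forall j, (a <= j < b)%N -> w j != 0.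
  move=> j hj; rewrite -normr_gt0; apply: lt_le_trans (hmin j hj).
  by rewrite normr_gt0.
have hst : forall j, (a <= j <= b)%N -> s j = t j.
  move=> j hj; case: (leqP j k) => hjk.
    apply: (fwd_eq (g := fun i => sg (w i)) (a := a) (b := k)) => //; last lia.
    move=> i hi; have := E_rev habs hsg (hwj i ltac:(lia)) (ht i ltac:(lia))
      (ht i.+1 ltac:(lia)) (Et i ltac:(lia)); by case.
    by rewrite hsa hta.
  apply: (bwd_eq (g := fun i => sg (w i)) (a := k.+1) (b := b)) => //; last lia.
  move=> i hi; have := E_rev habs hsg (hwj i ltac:(lia)) (ht i ltac:(lia))
    (ht i.+1 ltac:(lia)) (Et i ltac:(lia)); by case.
  by rewrite hsb htb.
rewrite le_eqVlt; apply/orP; left; apply/eqP.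
apply: eq_big_nat => i hi; rewrite /E !hst //; lia.
Qed.

Definition Pc {R : realType} (xb yb : nat -> 'rV[R]_3) i :=
  sqnorm3 (xb i - xb i.+1) + sqnorm3 (yb i - yb i.+1).
Definition Qc {R : realType} (xb yb : nat -> 'rV[R]_3) i :=
  sqnorm3 (xb i - yb i.+1) + sqnorm3 (yb i - xb i.+1).

Lemma term_eq {R : realType} (xb yb : nat -> 'rV[R]_3) (s : nat -> R) i :
  pm (s i) -> pm (s i.+1) ->
  sqnorm3 (xpt xb yb s i - xpt xb yb s i.+1)
      + sqnorm3 (ypt xb yb s i - ypt xb yb s i.+1)
  = (Pc xb yb i + Qc xb yb i) / 2 - E (wgt xb yb) s i.
Proof.
move=> h1 h2; have hk := key_id (xb i) (yb i) (xb i.+1) (yb i.+1).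
rewrite /xpt /ypt /E /wgt /Pc /Qc.
move: hk; set w := dot3 _ _.
set A := sqnorm3 (xb i - xb i.+1); set B := sqnorm3 (yb i - yb i.+1).
set C := sqnorm3 (xb i - yb i.+1); set D := sqnorm3 (yb i - xb i.+1).
move=> hk.
case: h1 => ->; case: h2 => ->; rewrite ?eqxx ?neg1_neq1 -/A -/B -/C -/D; lra.
Qed.

Lemma obj_eq {R : realType} n (xb yb : nat -> 'rV[R]_3) (s : nat -> R) :
  (forall i, (1 <= i <= n)%N -> pm (s i)) ->
  objective n xb yb s = \sum_(1 <= i < n) ((Pc xb yb i + Qc xb yb i) / 2)
                        - \sum_(1 <= i < n) E (wgt xb yb) s i.
Proof.
move=> hs; rewrite /objective -sumrB; apply: eq_big_nat => i hi.
by rewrite term_eq //; apply: hs; lia.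
Qed.

Lemma brk0 n u : brk n u 0 = 1%N. Proof. by []. Qed.
Lemma brkl n u l : (1 <= l <= size u)%N -> brk n u l = nth 0%N u l.-1.
Proof. by rewrite /brk => /andP[h1 h2]; rewrite h2; case: l h1 {h2}. Qed.
Lemma brkL1 n u : brk n u (size u).+1 = n.
Proof. by rewrite /brk ltnn. Qed.

Lemma brkl' n u l : (l < size u)%N -> brk n u l.+1 = nth 0%N u l.
Proof. by move=> h; rewrite brkl. Qed.

Lemma brk_range n u l : all (fun i => (1 <= i <= n)%N) u ->
  (1 <= l <= size u)%N -> (1 <= brk n u l <= n)%N.
Proof.
move=> /allP ha; case: l => [//|l] hl; rewrite brkl' //; apply: ha; apply: mem_nth; by case/andP: hl.
Qed.

Lemma brk_in n u l : (1 <= l <= size u)%N -> brk n u l \in u.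
Proof. case: l => [//|l] hl; rewrite brkl' //; apply: mem_nth; by case/andP: hl. Qed.

Lemma brk_strict n u l : sorted ltn u ->
  (1 <= l < size u)%N -> (brk n u l < brk n u l.+1)%N.
Proof.
move=> hs; case: l => [//|l] hl; rewrite !brkl' //; try lia.
have := sorted_ltn_nth ltn_trans 0%N hs; move=> /(_ l l.+1); apply;
  rewrite ?inE //; lia.
Qed.

Lemma brk_mono n u l m : (2 <= n)%N -> sorted ltn u ->
  all (fun i => (1 <= i <= n)%N) u ->
  (l <= m <= (size u).+1)%N -> (brk n u l <= brk n u m)%N.
Proof.
move=> hn hs ha hlm.
case: (eqVneq l m) => [->//|hne].
case: l hlm hne => [|l] hlm hne.
  rewrite brk0; case: (leqP m (size u)) => hm.
    case: m hlm hne hm => [//|m] hlm hne hm.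
    have := @brk_range n u (m.+1) ha; lia.
  have -> : m = (size u).+1 by lia.
  rewrite brkL1; lia.
case: (leqP m (size u)) => hm.
  case: m hlm hne hm => [//|m] hlm hne hm.
  rewrite !brkl'; try lia.
  have := sorted_ltn_nth ltn_trans 0%N hs; move=> /(_ l m) h.
  apply: ltnW; apply: h; rewrite ?inE; lia.
have -> : m = (size u).+1 by lia.
rewrite brkL1; have := @brk_range n u (l.+1) ha; lia.
Qed.

Lemma part2 {R : realType} (n : nat) (u : seq nat)
    (xb yb : nat -> 'rV[R]_3) (sg : R -> R) :
  (2 <= n)%N ->
  u != [::] ->
  sorted ltn u ->
  all (fun i => (1 <= i <= n)%N) u ->
  (forall t : R, 0 < t -> sg t = 1) ->
  (forall t : R, t < 0 -> sg t = -1) ->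
  (sg 0 = 1 \/ sg 0 = -1) ->
  (forall s, constructed n u xb yb sg s ->
     feasible n u s /\
     forall t, feasible n u t -> objective n xb yb s <= objective n xb yb t).
Proof.
move=> hn hu hso hall hp hneg h0 s.
rewrite /constructed => -[[h1a h1b] [[h2a h2b] h3]].
set L := size u in h1a h1b h2a h2b h3.
set w := wgt xb yb in h1b h2b h3.
set ib := brk n u in h1a h1b h2a h2b h3.
have hL : (1 <= L)%N by rewrite /L; case: (u) hu.
have hsg := sgpm hp hneg h0.
have habs := sgabs hp hneg.
have pm1 : pm (1 : R) by left.
have hib1 : forall l, (1 <= l <= L)%N -> s (ib l) = 1.
  move=> l hl; case: (eqVneq l L) => [->//|hne].
  by have [k [_ [_ [-> _]]]] := h3 l ltac:(lia).
have hmono : forall l m, (l <= m <= L.+1)%N -> (ib l <= ib m)%N.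
  by move=> l m hlm; apply: brk_mono.
have hrng : forall l, (1 <= l <= L)%N -> (1 <= ib l <= n)%N.
  by move=> l hl; apply: brk_range.
have hstr : forall l, (1 <= l < L)%N -> (ib l < ib l.+1)%N.
  by move=> l hl; apply: brk_strict.
have hibL1 : ib L.+1 = n by apply: brkL1.
have hib0 : ib 0%N = 1%N by [].
have hpre : forall l, (1 <= l <= L)%N -> forall i, (1 <= i <= ib l)%N -> pm (s i).
  elim=> [//|l IH] hl i hi.
  case: (eqVneq l 0%N) => [hl0|hl0].
    subst l; apply: (bwd_pm hsg (w := w) (a := ib 0%N) (b := ib 1%N)) => //.
    - by rewrite h2a.
  case: (leqP i (ib l)) => hil; first by apply: IH => //; lia.
  have [k [hk [_ [hsl [hf [hsr hb]]]]]] := h3 l ltac:(lia).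
  case: (leqP i k) => hik.
    apply: (fwd_pm hsg (w := w) (a := ib l) (b := k)) => //; first by rewrite hsl.
    lia.
  apply: (bwd_pm hsg (w := w) (a := k.+1) (b := ib l.+1)) => //; first by rewrite hsr.
  lia.
have hps : forall i, (1 <= i <= n)%N -> pm (s i).
  move=> i hi; case: (leqP i (ib L)) => hiL.
    apply: (hpre L) => //; lia.
  apply: (fwd_pm hsg (w := w) (a := ib L) (b := n)) => //.
    by rewrite h1a.
  by rewrite -hibL1.
  lia.
have hu1 : forall (t : nat -> R), (forall i, i \in u -> t i = 1) ->
    forall l, (1 <= l <= L)%N -> t (ib l) = 1.
  by move=> t ht l hl; apply: ht; apply: brk_in.
split.
  split => // i /(nthP 0%N) [j hj <-].
  have -> : nth 0%N u j = ib j.+1 by rewrite /ib brkl //; lia.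
  by apply: hib1; apply/andP; split => //; exact: hj.
move=> t [htp htu].
have htb := hu1 t htu.
rewrite !(obj_eq n) //.
suff : \sum_(1 <= i < n) E w t i <= \sum_(1 <= i < n) E w s i by rewrite /w; lra.
have hpre2 : forall l, (1 <= l <= L)%N ->
    \sum_(1 <= i < ib l) E w t i <= \sum_(1 <= i < ib l) E w s i.
  elim=> [//|l IH] hl.
  case: (eqVneq l 0%N) => [hl0|hl0].
    subst l; apply: chunk_full.
      move=> i hi; apply: (E_bwd habs).
        apply: (bwd_pm hsg (w := w) (a := ib 0%N) (b := ib 1%N)) => //.
        - by rewrite h2a.
        - rewrite hib0; lia.
      by apply: h2b.
    move=> j hj; apply: htp; have := hrng 1%N ltac:(lia); lia.
  have hl1 := hrng l ltac:(lia).
  have hl2 := hstr l ltac:(lia).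
  rewrite (big_cat_nat (n := ib l)) /=; try lia.
  rewrite [X in _ <= X](big_cat_nat (n := ib l)) /=; try lia.
  apply: lerD; first by apply: IH; lia.
  have [k [hk [hmin [hsl [hf [hsr hb]]]]]] := h3 l ltac:(lia).
  apply: (chunk_mid habs hsg hk hmin hsl hsr hf hb).
    move=> j hj; apply: htp; have := hrng l.+1 ltac:(lia); lia.
    by apply: htb; lia.
  by apply: htb; lia.
have hLr := hrng L ltac:(lia).
rewrite (big_cat_nat (n := ib L)) /=; try lia.
rewrite [X in _ <= X](big_cat_nat (n := ib L)) /=; try lia.
apply: lerD; first by apply: hpre2; lia.
apply: chunk_full.
  move=> i hi; apply: (E_fwd habs).
    apply: hps; lia.
  by apply: h1b; rewrite hibL1.
move=> j hj; apply: htp; lia.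
Qed.

Fixpoint amin {R : realType} (f : nat -> R) (k : nat) (s : seq nat) : nat :=
  match s with
  | [::] => k
  | x :: s' => amin f (if f x < f k then x else k) s'
  end.

Lemma amin_mem {R : realType} (f : nat -> R) s k : amin f k s \in k :: s.
Proof.
elim: s k => [|x s IH] k /=; first by rewrite inE.
have := IH (if f x < f k then x else k); rewrite !inE.
case: ifP => _ /orP [->|->]; rewrite ?orbT //.
Qed.

Lemma amin_le {R : realType} (f : nat -> R) s k :
  f (amin f k s) <= f k /\ forall x, x \in s -> f (amin f k s) <= f x.
Proof.
elim: s k => [|x s IH] k /=; first by split.
set k' := if f x < f k then x else k.
have hk1 : f k' <= f k by rewrite /k'; case: ifP => h //; apply: ltW.
have hk2 : f k' <= f x by rewrite /k'; case: ifP => h //; rewrite leNgt h.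
have [IH1 IH2] := IH k'; split; first exact: le_trans IH1 hk1.
move=> y; rewrite inE => /orP [/eqP ->|hy]; first exact: le_trans IH1 hk2.
exact: IH2.
Qed.

Definition Fw {R : realType} (sg : R -> R) (w : nat -> R) a j :=
  \prod_(a <= m < j) sg (w m).
Definition Bw {R : realType} (sg : R -> R) (w : nat -> R) j b :=
  \prod_(j <= m < b) sg (w m).

Lemma Fw_refl {R : realType} (sg : R -> R) w a : Fw sg w a a = 1.
Proof. by rewrite /Fw big_geq. Qed.
Lemma Bw_refl {R : realType} (sg : R -> R) w a : Bw sg w a a = 1.
Proof. by rewrite /Bw big_geq. Qed.
Lemma Fw_rec {R : realType} (sg : R -> R) w a j :
  (a <= j)%N -> Fw sg w a j.+1 = sg (w j) * Fw sg w a j.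
Proof. by move=> h; rewrite /Fw big_nat_recr // mulrC. Qed.
Lemma Bw_rec {R : realType} (sg : R -> R) w j b :
  (j < b)%N -> Bw sg w j b = sg (w j) * Bw sg w j.+1 b.
Proof. by move=> h; rewrite /Bw big_ltn. Qed.

Definition Kc {R : realType} n u (w : nat -> R) l :=
  amin (fun j => `|w j|) (brk n u l) (index_iota (brk n u l) (brk n u l.+1)).

Definition sdef {R : realType} n u (w : nat -> R) (sg : R -> R) i :=
  let c := find (fun x => i < x)%N u in
  if c == 0%N then Bw sg w i (brk n u 1)
  else if c == size u then Fw sg w (brk n u (size u)) i
  else if (i <= Kc n u w c)%N then Fw sg w (brk n u c) i
  else Bw sg w i (brk n u c.+1).

Lemma find_eq (a : pred nat) (u : seq nat) l : (l <= size u)%N ->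
  (forall m, (m < l)%N -> ~~ a (nth 0%N u m)) ->
  ((l < size u)%N -> a (nth 0%N u l)) -> find a u = l.
Proof.
move=> hl hb ha; apply/eqP; rewrite eqn_leq; apply/andP; split.
  rewrite leqNgt; apply/negP => hlt.
  have hl' : (l < size u)%N by have := find_size a u; lia.
  by have := before_find 0%N hlt; rewrite ha.
rewrite leqNgt; apply/negP => hlt.
have hh : has a u by rewrite has_find; have := hl; lia.
by have := hb _ hlt; rewrite nth_find.
Qed.

Lemma part1 {R : realType} (n : nat) (u : seq nat)
    (xb yb : nat -> 'rV[R]_3) (sg : R -> R) :
  (2 <= n)%N ->
  u != [::] ->
  sorted ltn u ->
  all (fun i => (1 <= i <= n)%N) u ->
  exists s, constructed n u xb yb sg s.
Proof.
move=> hn hu hso hall.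
set w := wgt xb yb.
set L := size u.
set ib := brk n u.
have hL : (1 <= L)%N by rewrite /L; case: (u) hu.
have hmono : forall l m, (l <= m <= L.+1)%N -> (ib l <= ib m)%N.
  by move=> l m hlm; apply: brk_mono.
have hrng : forall l, (1 <= l <= L)%N -> (1 <= ib l <= n)%N.
  by move=> l hl; apply: brk_range.
have hstr : forall l, (1 <= l < L)%N -> (ib l < ib l.+1)%N.
  by move=> l hl; apply: brk_strict.
have hibL1 : ib L.+1 = n by apply: brkL1.
have hnth : forall m, (m < L)%N -> nth 0%N u m = ib m.+1.
  by move=> m hm; rewrite /ib brkl //; lia.
have hc0 : forall i, (i < ib 1%N)%N -> find (fun x => i < x)%N u = 0%N.
  move=> i hi; apply: find_eq => //.
  by move=> hs; rewrite hnth.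
have hcl : forall l i, (1 <= l <= L)%N -> (ib l <= i)%N ->
    ((l < L)%N -> (i < ib l.+1)%N) -> find (fun x => i < x)%N u = l.
  move=> l i hl hi hi2; apply: find_eq.
  - by case/andP: hl.
  - move=> m hm; rewrite hnth; last by lia.
    have := hmono m.+1 l ltac:(lia); rewrite -leqNgt; lia.
  - by move=> hl2; rewrite hnth //; apply: hi2.
have hK : forall l, (1 <= l < L)%N ->
    (ib l <= Kc n u w l < ib l.+1)%N /\
    (forall j, (ib l <= j < ib l.+1)%N -> `|w (Kc n u w l)| <= `|w j|).
  move=> l hl; have hs := hstr l hl; split.
    have := amin_mem (fun j => `|w j|) (index_iota (ib l) (ib l.+1)) (ib l).
    rewrite /Kc -/ib inE mem_index_iota => /orP [/eqP ->|//]; lia.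
  move=> j hj; have [_ h2] := amin_le (fun j => `|w j|)
     (index_iota (ib l) (ib l.+1)) (ib l).
  by apply: h2; rewrite mem_index_iota.
set s := sdef n u w sg.
have Vst : forall l, (1 <= l <= L)%N -> s (ib l) = 1.
  move=> l hl; rewrite /s /sdef (hcl l) //; last first.
    by move=> hl2; apply: hstr; lia.
  have -> : (l == 0%N) = false by apply/negbTE; lia.
  case: (eqVneq l L) => [->|hne]; first by rewrite Fw_refl.
  have [/andP[h1 _] _] := hK l ltac:(lia).
  by rewrite h1 Fw_refl.
have V0 : forall i, (i <= ib 1%N)%N -> s i = Bw sg w i (ib 1%N).
  move=> i hi; case: (ltnP i (ib 1%N)) => hi2.
    by rewrite /s /sdef hc0.
  have -> : i = ib 1%N by lia.
  by rewrite Vst ?Bw_refl //; lia.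
have VL : forall i, (ib L <= i)%N -> s i = Fw sg w (ib L) i.
  move=> i hi; rewrite /s /sdef (hcl L) //; try lia.
  have -> : (L == 0%N) = false by apply/negbTE; lia.
  by rewrite eqxx.
have V1 : forall l i, (1 <= l < L)%N -> (ib l <= i <= Kc n u w l)%N ->
    s i = Fw sg w (ib l) i.
  move=> l i hl hi; have [/andP[h1 h2] _] := hK l hl.
  rewrite /s /sdef (hcl l) //; try lia.
  have -> : (l == 0%N) = false by apply/negbTE; lia.
  have -> : (l == L) = false by apply/negbTE; lia.
  by have -> : (i <= Kc n u w l)%N by lia.
have V2 : forall l i, (1 <= l < L)%N -> (Kc n u w l < i <= ib l.+1)%N ->
    s i = Bw sg w i (ib l.+1).
  move=> l i hl hi; have [/andP[h1 h2] _] := hK l hl.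
  case: (ltnP i (ib l.+1)) => hi2; last first.
    have -> : i = ib l.+1 by lia.
    by rewrite Vst ?Bw_refl //; lia.
  rewrite /s /sdef (hcl l) //; try lia.
  have -> : (l == 0%N) = false by apply/negbTE; lia.
  have -> : (l == L) = false by apply/negbTE; lia.
  by have -> : (i <= Kc n u w l)%N = false by apply/negbTE; lia.
exists s; rewrite /constructed -/L -/ib -/w.
split; [split|split; [split|]].
- by apply: Vst; lia.
- move=> i hi; rewrite !VL; try lia.
  by rewrite Fw_rec //; lia.
- by apply: Vst; lia.
- move=> i hi; rewrite !V0; try lia.
  by rewrite Bw_rec //; lia.
- move=> l hl; have [/andP[h1 h2] hmin] := hK l hl.
  exists (Kc n u w l); split; first by lia.
  split => //; split; first by apply: Vst; lia.
  split.
    move=> i hi; rewrite !(V1 l) //; try lia.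
    by rewrite Fw_rec //; lia.
  split; first by apply: Vst; lia.
  move=> i hi; rewrite !(V2 l) //; try lia.
  by rewrite Bw_rec //; lia.
Qed.

Theorem lemma4p1 (R : realType) (n : nat) (u : seq nat)
    (xb yb : nat -> 'rV[R]_3) (sg : R -> R) :
  (2 <= n)%N ->
  u != [::] ->
  sorted ltn u ->
  all (fun i => (1 <= i <= n)%N) u ->
  (forall t : R, 0 < t -> sg t = 1) ->
  (forall t : R, t < 0 -> sg t = -1) ->
  (sg 0 = 1 \/ sg 0 = -1) ->
  (exists s, constructed n u xb yb sg s) /\
  (forall s, constructed n u xb yb sg s ->
     feasible n u s /\
     forall t, feasible n u t -> objective n xb yb s <= objective n xb yb t).
Proof.
move=> hn hu hso hall hp hneg h0; split.
  exact: part1.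
exact: part2.
Qed.
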